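(* Let $R_1,R_2\in\mathrm{DGRings}^{0,-1}$ and let $\alpha$ be an admissible correspondence $R_1\xleftarrow{f}R_{12}\xrightarrow{g}R_2$. (i) Let $\mathrm{adm}^{-1}(\alpha)$ be the set of isomorphism classes of pairs consisting of $\varphi\in\mathrm{Hom}(R_1,R_2)$ and an isomorphism $\mathrm{adm}(\varphi)\xrightarrow{\sim}\alpha$. Then $\mathrm{adm}^{-1}(\alpha)$ canonically identifies with the set of splittings $\{s:R_1\to R_{12}\mid f\circ s=\mathrm{id}_{R_1}\}$ (morphisms in $\mathrm{DGRings}^{0,-1}$). Under this identification the map $\mathrm{adm}^{-1}(\alpha)\to\mathrm{Hom}(R_1,R_2)$ is $s\mapsto g\circ s$. (ii) The map $s\mapsto s^0$ from the set of such splittings $s$ to the set of ring homomorphisms $\sigma:R_1^0\to R_{12}^0$ with $f^0\circ\sigma=\mathrm{id}_{R_1^0}$ is bijective.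
   Context: Rings are commutative and unital. $\mathrm{DGRings}^{0,-1}$ is the category of commutative DG rings $R$ with $R^i=0$ for $i\ne 0,-1$. Equivalently, such $R$ is a ring $R^0$, an $R^0$-module $R^{-1}$ and an $R^0$-linear $d:R^{-1}\to R^0$ with $d(x)y=d(y)x$. Quasi-isomorphisms are morphisms inducing isomorphisms on $\ker d$ and $\operatorname{coker} d$. A correspondence is a diagram $R_1\xleftarrow{f}R_{12}\xrightarrow{g}R_2$ in $\mathrm{DGRings}^{0,-1}$. Morphisms of correspondences are maps $h$ of middle terms with $f'h=f$, $g'h=g$. A correspondence is admissible if $f$ is a quasi-isomorphism and $R_{12}^{-1}\to R_1^{-1}\times R_2^{-1}$ is an isomorphism. It is an anamorphism if $f$ is a surjective quasi-isomorphism. $\mathrm{Corr}_{\mathrm{adm}}(R_1,R_2)\subset\mathrm{Corr}_{\mathrm{ana}}(R_1,R_2)$ denote the full subcategories. $\mathrm{Adm}$ is the left adjoint to the inclusion (admissibilization). The map $\mathrm{adm}:\mathrm{Hom}(R_1,R_2)\to\mathrm{Corr}_{\mathrm{adm}}(R_1,R_2)$ sends $\varphi$ to $\mathrm{Adm}$ of the correspondence $R_1\xleftarrow{\mathrm{id}}R_1\xrightarrow{\varphi}R_2$. *)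

(* Defs.v *)
From HB Require Import structures.
From mathcomp Require Import all_boot all_order all_algebra.
Set Implicit Arguments. Unset Strict Implicit. Unset Printing Implicit Defensive.
Import GRing.Theory.
Local Open Scope ring_scope.

(* An object of DGRings^{0,-1}: a commutative ring R^0 (the zero ring is
   allowed), an R^0-module R^{-1} and an R^0-linear d : R^{-1} -> R^0 with
   d(x) y = d(y) x. *)
Record DGR := {
  dg0 : comPzRingType;
  dg1 : lmodType dg0;
  dgd : dg1 -> dg0;
  dgd_add : forall x y : dg1, dgd (x + y) = dgd x + dgd y;
  dgd_scale : forall (a : dg0) (x : dg1), dgd (a *: x) = a * dgd x;
  dgd_comm : forall x y : dg1, dgd x *: y = dgd y *: x }.

Record dghom (R S : DGR) := {
  h0 : dg0 R -> dg0 S;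
  h1 : dg1 R -> dg1 S;
  h0_1 : h0 1 = 1;
  h0_D : forall a b, h0 (a + b) = h0 a + h0 b;
  h0_M : forall a b, h0 (a * b) = h0 a * h0 b;
  h1_D : forall x y, h1 (x + y) = h1 x + h1 y;
  h1_Z : forall a x, h1 (a *: x) = h0 a *: h1 x;
  h_d : forall x, @dgd S (h1 x) = h0 (@dgd R x) }.

Definition homeq (R S : DGR) (p q : dghom R S) : Prop :=
  (forall a, h0 p a = h0 q a) /\ (forall x, h1 p x = h1 q x).

Definition idhom (R : DGR) : dghom R R.
Proof.
refine (@Build_dghom R R id id _ _ _ _ _ _); by [].
Defined.

Definition dgcomp (R S T : DGR) (q : dghom S T) (p : dghom R S) : dghom R T.
Proof.
refine (@Build_dghom R T (fun a => h0 q (h0 p a)) (fun x => h1 q (h1 p x)) _ _ _ _ _ _).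
- by rewrite !h0_1.
- by move=> a b; rewrite !h0_D.
- by move=> a b; rewrite !h0_M.
- by move=> x y; rewrite !h1_D.
- by move=> a x; rewrite !h1_Z.
- by move=> x; rewrite !h_d.
Defined.

Definition is_rhom (A B : comPzRingType) (s : A -> B) : Prop :=
  s 1 = 1 /\ (forall a b, s (a + b) = s a + s b) /\ (forall a b, s (a * b) = s a * s b).

(* Quasi-isomorphism: induces a bijection ker d -> ker d and coker d -> coker d. *)
Definition qiso (R S : DGR) (p : dghom R S) : Prop :=
  (forall x y, @dgd R x = 0 -> @dgd R y = 0 -> h1 p x = h1 p y -> x = y) /\
  (forall y, @dgd S y = 0 -> exists x, @dgd R x = 0 /\ h1 p x = y) /\
  (* on coker d = R^0 / d(R^{-1}) *)
  (forall a b, (exists y, h0 p a - h0 p b = @dgd S y) -> exists x, a - b = @dgd R x) /\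
  (forall b, exists a y, b = h0 p a + @dgd S y).

Definition surj_hom (R S : DGR) (p : dghom R S) : Prop :=
  (forall b, exists a, h0 p a = b) /\ (forall y, exists x, h1 p x = y).

Record corr (R1 R2 : DGR) := { cm : DGR; cf : dghom cm R1; cg : dghom cm R2 }.

Record cmor (R1 R2 : DGR) (c c' : corr R1 R2) := {
  mid : dghom (cm c) (cm c');
  mid_f : homeq (dgcomp (cf c') mid) (cf c);
  mid_g : homeq (dgcomp (cg c') mid) (cg c) }.

Definition admissible (R1 R2 : DGR) (c : corr R1 R2) : Prop :=
  qiso (cf c) /\
  (forall x y, h1 (cf c) x = h1 (cf c) y -> h1 (cg c) x = h1 (cg c) y -> x = y) /\
  (forall (x1 : dg1 R1) (x2 : dg1 R2), exists x, h1 (cf c) x = x1 /\ h1 (cg c) x = x2).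

Definition anamorphism (R1 R2 : DGR) (c : corr R1 R2) : Prop :=
  qiso (cf c) /\ surj_hom (cf c).

Definition is_iso (R1 R2 : DGR) (c c' : corr R1 R2) (u : cmor c c') : Prop :=
  exists v : cmor c' c,
    homeq (dgcomp (mid v) (mid u)) (idhom (cm c)) /\
    homeq (dgcomp (mid u) (mid v)) (idhom (cm c')).

(* Reflection of an (anamorphism) correspondence c into Corr_adm: an
   admissible correspondence Adm(c) with a universal unit c -> Adm(c).
   A left adjoint Adm to the inclusion Corr_adm -> Corr_ana is the same as
   such a reflection for every anamorphism c. *)
Record reflection (R1 R2 : DGR) (c : corr R1 R2) := {
  rA : corr R1 R2;
  rA_adm : admissible rA;
  reta : cmor c rA;
  runiv : forall (B : corr R1 R2), admissible B -> forall k : cmor c B,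
     exists u : cmor rA B,
       homeq (dgcomp (mid u) (mid reta)) (mid k) /\
       forall u' : cmor rA B, homeq (dgcomp (mid u') (mid reta)) (mid k) ->
         homeq (mid u) (mid u') }.

Definition c_id (R1 R2 : DGR) (phi : dghom R1 R2) : corr R1 R2 :=
  {| cm := R1; cf := idhom R1; cg := phi |}.

Lemma cid_ana (R1 R2 : DGR) (phi : dghom R1 R2) : anamorphism (c_id phi).
Proof.
rewrite /anamorphism /qiso /surj_hom /=.
split; [split; [|split; [|split]]|split].
- by move=> x y _ _.
- by move=> y Hy; exists y.
- by move=> a b [y Hy]; exists y.
- by move=> b; exists b, 0; rewrite -(scale0r (0 : dg1 R1)) dgd_scale mul0r addr0.
- by move=> b; exists b.
- by move=> y; exists y.
Qed.

Definition AdmT (R1 R2 : DGR) := forall c : corr R1 R2, anamorphism c -> reflection c.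

Definition adm (R1 R2 : DGR) (Adm : AdmT R1 R2) (phi : dghom R1 R2) : reflection (c_id phi) :=
  Adm (c_id phi) (cid_ana phi).

Record admfib (R1 R2 : DGR) (Adm : AdmT R1 R2) (alpha : corr R1 R2) := {
  af_phi : dghom R1 R2;
  af_u : cmor (rA (adm Adm af_phi)) alpha;
  af_iso : is_iso af_u }.

(* Isomorphism of objects of the fibre: phi = phi' (Hom(R1,R2) is a set,
   viewed as a discrete category) and u' o adm(id) = u, where adm(id) is the
   morphism adm(phi) -> adm(phi') induced by the identity. *)
Definition fib_iso (R1 R2 : DGR) (Adm : AdmT R1 R2) (alpha : corr R1 R2)
  (p q : admfib Adm alpha) : Prop :=
  homeq (af_phi p) (af_phi q) /\
  exists w : cmor (rA (adm Adm (af_phi p))) (rA (adm Adm (af_phi q))),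
    homeq (dgcomp (mid w) (mid (reta (adm Adm (af_phi p)))))
          (mid (reta (adm Adm (af_phi q)))) /\
    homeq (dgcomp (mid (af_u q)) (mid w)) (mid (af_u p)).

Definition fib_splitting (R1 R2 : DGR) (Adm : AdmT R1 R2) (alpha : corr R1 R2)
  (p : admfib Adm alpha) : dghom R1 (cm alpha) :=
  dgcomp (mid (af_u p)) (mid (reta (adm Adm (af_phi p)))).

Definition splitting (R1 R2 : DGR) (alpha : corr R1 R2) (s : dghom R1 (cm alpha)) : Prop :=
  homeq (dgcomp (cf alpha) s) (idhom R1).

(* Main.v *)
Require Import Defs.
From HB Require Import structures.
From mathcomp Require Import all_boot all_order all_algebra.
From Stdlib Require Import IndefiniteDescription.
Set Implicit Arguments. Unset Strict Implicit. Unset Printing Implicit Defensive.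
Import GRing.Theory.
Local Open Scope ring_scope.

Lemma addm_sub (V W : zmodType) (F : V -> W) :
  (forall a b, F (a + b) = F a + F b) -> forall a b, F (a - b) = F a - F b.
Proof. move=> H a b; have := H (a - b) b; rewrite subrK => ->; by rewrite addrK. Qed.

Lemma addm_0 (V W : zmodType) (F : V -> W) :
  (forall a b, F (a + b) = F a + F b) -> F 0 = 0.
Proof. by move=> H; have := addm_sub H 0 0; rewrite subr0 subrr. Qed.

Lemma dgd0 (R : DGR) : @dgd R 0 = 0. Proof. exact: (@addm_0 _ _ _ (@dgd_add R)). Qed.
Lemma dgdB (R : DGR) x y : @dgd R (x - y) = dgd x - dgd y. Proof. exact: (@addm_sub _ _ _ (@dgd_add R)). Qed.
Lemma h0_0 R S (p : dghom R S) : h0 p 0 = 0. Proof. exact: (@addm_0 _ _ _ (h0_D p)). Qed.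
Lemma h0B R S (p : dghom R S) a b : h0 p (a - b) = h0 p a - h0 p b. Proof. exact: (@addm_sub _ _ _ (h0_D p)). Qed.
Lemma h1_0 R S (p : dghom R S) : h1 p 0 = 0. Proof. exact: (@addm_0 _ _ _ (h1_D p)). Qed.
Lemma h1B R S (p : dghom R S) a b : h1 p (a - b) = h1 p a - h1 p b. Proof. exact: (@addm_sub _ _ _ (h1_D p)). Qed.

Lemma inv_hom (A B : DGR) (u : dghom A B) :
  injective (h0 u) -> (forall b, exists a, h0 u a = b) ->
  injective (h1 u) -> (forall y, exists x, h1 u x = y) ->
  exists v : dghom B A, homeq (dgcomp v u) (idhom A) /\ homeq (dgcomp u v) (idhom B).
Proof.
move=> i0 s0 i1 s1.
have [g0 Hg0] := functional_choice _ s0.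
have [g1 Hg1] := functional_choice _ s1.
have K0 a : g0 (h0 u a) = a by apply: i0; rewrite Hg0.
have K1 x : g1 (h1 u x) = x by apply: i1; rewrite Hg1.
have p1 : g0 1 = 1 by apply: i0; rewrite Hg0 h0_1.
have p2 a b : g0 (a + b) = g0 a + g0 b by apply: i0; rewrite Hg0 h0_D !Hg0.
have p3 a b : g0 (a * b) = g0 a * g0 b by apply: i0; rewrite Hg0 h0_M !Hg0.
have p4 x y : g1 (x + y) = g1 x + g1 y by apply: i1; rewrite Hg1 h1_D !Hg1.
have p5 a x : g1 (a *: x) = g0 a *: g1 x by apply: i1; rewrite Hg1 h1_Z Hg0 Hg1.
have p6 x : dgd (g1 x) = g0 (dgd x) by apply: i0; rewrite Hg0 -h_d Hg1.
exists (@Build_dghom B A g0 g1 p1 p2 p3 p4 p5 p6).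
by split; split => ? /=.
Qed.

Lemma adm_mor_iso R1 R2 (c c' : corr R1 R2) (u : cmor c c') :
  admissible c -> admissible c' -> is_iso u.
Proof.
case=> [[kiA [ksA [ciA csA]]] [iA sA]] [[kiC [ksC [ciC csC]]] [iC sC]].
case: u => m [mf0 mf1] [mg0 mg1] /=.
simpl in *.
have inj1 : injective (h1 m).
  move=> x y E; apply: iA; [by rewrite -!mf1 E | by rewrite -!mg1 E].
have surj1 : forall y, exists x, h1 m x = y.
  move=> y; have [x [Ex1 Ex2]] := sA (h1 (cf c') y) (h1 (cg c') y).
  exists x; apply: iC; [by rewrite mf1 Ex1 | by rewrite mg1 Ex2].
have inj0 : injective (h0 m).
  move=> a b E.
  have [x Hx] : exists x, a - b = dgd x.
    apply: ciA; exists 0; by rewrite -!mf0 E subrr dgd0.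
  have Hdx : dgd (h1 m x) = 0 by rewrite h_d -Hx h0B E subrr.
  have Hfx : dgd (h1 (cf c) x) = 0 by rewrite -mf1 h_d Hdx h0_0.
  have [x' [Hx'0 Hx'f]] := ksA _ Hfx.
  have E' : h1 m x' = h1 m x.
    apply: kiC => //; first by rewrite h_d Hx'0 h0_0.
    by rewrite !mf1 Hx'f.
  have Exx := inj1 _ _ E'.
  by apply/eqP; rewrite -subr_eq0 Hx -Exx Hx'0.
have surj0 : forall b, exists a, h0 m a = b.
  move=> e; have [a [z Ez]] := csA (h0 (cf c') e).
  have [y [Hy _]] := sC z 0.
  have [w Hw] : exists w, (e - h0 m a - dgd y) - 0 = dgd w.
    apply: ciC; exists 0.
    rewrite !h0B h0_0 subr0 -h_d Hy mf0 Ez dgd0.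
    by rewrite [h0 (cf c) a + _]addrC addrK subrr.
  have [x Hx] := surj1 (y + w).
  exists (a + dgd x).
  rewrite h0_D -h_d Hx dgd_add -Hw subr0.
  by rewrite [dgd _ + _]addrC subrK addrC subrK.
have [v [Hv1 Hv2]] := inv_hom inj0 surj0 inj1 surj1.
have vf : homeq (dgcomp (cf c) v) (cf c').
  by split => ? /=; [rewrite -mf0; congr (h0 _ _); apply: Hv2.1
                    | rewrite -mf1; congr (h1 _ _); apply: Hv2.2].
have vg : homeq (dgcomp (cg c) v) (cg c').
  by split => ? /=; [rewrite -mg0; congr (h0 _ _); apply: Hv2.1
                    | rewrite -mg1; congr (h1 _ _); apply: Hv2.2].
by exists (Build_cmor vf vg).
Qed.

Definition cmor_comp R1 R2 (c1 c2 c3 : corr R1 R2) (q : cmor c2 c3) (p : cmor c1 c2) : cmor c1 c3.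
Proof.
refine (@Build_cmor R1 R2 c1 c3 (dgcomp (mid q) (mid p)) _ _).
- case: (mid_f q) => q0 q1; case: (mid_f p) => p0 p1.
  split => a /=; [move: (q0 (h0 (mid p) a)) => /= ->; exact: p0
                 | move: (q1 (h1 (mid p) a)) => /= ->; exact: p1].
- case: (mid_g q) => q0 q1; case: (mid_g p) => p0 p1.
  split => a /=; [move: (q0 (h0 (mid p) a)) => /= ->; exact: p0
                 | move: (q1 (h1 (mid p) a)) => /= ->; exact: p1].
Defined.

Lemma uniq_f R1 R2 (alpha : corr R1 R2) : admissible alpha ->
  forall y y' : dg1 (cm alpha), h1 (cf alpha) y = h1 (cf alpha) y' -> dgd y = dgd y' -> y = y'.
Proof.
case=> [[ki _] _] y y' E D.
apply/eqP; rewrite -subr_eq0; apply/eqP.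
apply: ki; first by rewrite dgdB D subrr.
- exact: dgd0.
- by rewrite h1B E subrr h1_0.
Qed.

Unset Implicit Arguments.
Theorem lemma4p3p6 (R1 R2 : DGR) (alpha : corr R1 R2) (Halpha : admissible alpha)
  (Adm : AdmT R1 R2) :
  ((forall p : admfib Adm alpha, splitting (fib_splitting p)) /\
   (forall p q : admfib Adm alpha,
      fib_iso p q <-> homeq (fib_splitting p) (fib_splitting q)) /\
   (forall s : dghom R1 (cm alpha), splitting s ->
      exists p : admfib Adm alpha, homeq (fib_splitting p) s) /\
   (forall p : admfib Adm alpha,
      homeq (af_phi p) (dgcomp (cg alpha) (fib_splitting p)))) /\
  ((forall s s' : dghom R1 (cm alpha), splitting s -> splitting s' ->
      (forall a, h0 s a = h0 s' a) -> homeq s s') /\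
   (forall sigma : dg0 R1 -> dg0 (cm alpha), is_rhom sigma ->
      (forall a, h0 (cf alpha) (sigma a) = a) ->
      exists s : dghom R1 (cm alpha), splitting s /\ forall a, h0 s a = sigma a)).
Proof.
have split_i : forall p : admfib Adm alpha, splitting (fib_splitting p).
  move=> p; rewrite /splitting /fib_splitting.
  set e := reta _; set u := af_u p.
  case: (mid_f u) => u0 u1; case: (mid_f e) => e0 e1.
  split => a /=; [move: (u0 (h0 (mid e) a)) => /= ->; exact: e0
                 | move: (u1 (h1 (mid e) a)) => /= ->; exact: e1].
have phi_i : forall p : admfib Adm alpha,
      homeq (af_phi p) (dgcomp (cg alpha) (fib_splitting p)).
  move=> p; rewrite /fib_splitting.
  set e := reta _; set u := af_u p.
  case: (mid_g u) => u0 u1; case: (mid_g e) => e0 e1.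
  split => a /=; [move: (u0 (h0 (mid e) a)) => /= ->; by move: (e0 a) => /= ->
                 | move: (u1 (h1 (mid e) a)) => /= ->; by move: (e1 a) => /= ->].
split; [split; [exact: split_i | split; [|split; [|exact: phi_i]]] | split].
- move=> p q; split.
  + case=> [_ [w [Hw1 Hw2]]]; rewrite /fib_splitting.
    split => a /=.
    * have := Hw2.1 (h0 (mid (reta (adm Adm (af_phi p)))) a); rewrite /= => <-.
      by move: (Hw1.1 a) => /= ->.
    * have := Hw2.2 (h1 (mid (reta (adm Adm (af_phi p)))) a); rewrite /= => <-.
      by move: (Hw1.2 a) => /= ->.
  + move=> H; split.
    * split=> a.
        rewrite (proj1 (phi_i p) a) (proj1 (phi_i q) a) /=.
        by move: (H.1 a) => /= ->.
      rewrite (proj2 (phi_i p) a) (proj2 (phi_i q) a) /=.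
      by move: (H.2 a) => /= ->.
    * case: (af_iso q) => v [Hv1 Hv2].
      exists (cmor_comp v (af_u p)); split.
      - split => a /=.
          by move: (H.1 a) => /= ->; exact: (Hv1.1 _).
        by move: (H.2 a) => /= ->; exact: (Hv1.2 _).
      - split => a /=; [exact: (Hv2.1 _) | exact: (Hv2.2 _)].
- move=> s Hs.
  pose phi := dgcomp (cg alpha) s.
  pose k := @Build_cmor _ _ (c_id phi) alpha s Hs (conj (fun _ => erefl) (fun _ => erefl)).
  have [u [Hu _]] := runiv (adm Adm phi) Halpha k.
  exists {| af_phi := phi; af_u := u; af_iso := adm_mor_iso u (rA_adm _) Halpha |}.
  exact: Hu.
- move=> s s' Hs Hs' E; split => // x.
  apply: (uniq_f Halpha).
  + by move: (Hs.2 x) (Hs'.2 x) => /= -> ->.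
  + by rewrite !h_d E.
- move=> sigma [s1 [sD sM]] Hsf.
  case: (Halpha) => [[ki [ks [ci cs]]] [iA sA]].
  have ex : forall x : dg1 R1, exists y, h1 (cf alpha) y = x /\ dgd y = sigma (dgd x).
    move=> x; have [y0 [Hy0 _]] := sA x 0.
    set a := dgd y0 - sigma (dgd x).
    have [z Hz] : exists z, a - 0 = dgd z.
      apply: ci; exists 0.
      by rewrite h0_0 subr0 /a h0B -h_d Hy0 Hsf subrr dgd0.
    have Hz' : dgd (h1 (cf alpha) z) = 0.
      by rewrite h_d -Hz subr0 /a h0B -h_d Hy0 Hsf subrr.
    have [w [Hw0 Hwf]] := ks _ Hz'.
    exists (y0 - (z - w)); split.
      by rewrite !h1B Hwf subrr subr0 Hy0.
    by rewrite !dgdB Hw0 subr0 -Hz subr0 /a opprB addrC subrK.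
  have [g1 Hg1] := functional_choice _ ex.
  have p4 x y : g1 (x + y) = g1 x + g1 y.
    apply: (uniq_f Halpha); first by rewrite h1_D !(proj1 (Hg1 _)).
    by rewrite dgd_add !(proj2 (Hg1 _)) dgd_add sD.
  have p5 a x : g1 (a *: x) = sigma a *: g1 x.
    apply: (uniq_f Halpha); first by rewrite h1_Z Hsf !(proj1 (Hg1 _)).
    by rewrite dgd_scale !(proj2 (Hg1 _)) dgd_scale sM.
  have p6 x : dgd (g1 x) = sigma (dgd x) := proj2 (Hg1 x).
  exists (@Build_dghom R1 (cm alpha) sigma g1 s1 sD sM p4 p5 p6).
  split; last by [].
  split => ? /=; [exact: Hsf | exact: (proj1 (Hg1 _))].
Qed.
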